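(* Let $\mathcal{K}$ be a Fraïssé class in a relational language $L$ with Fraïssé limit $\mathbf{K}$, exhaustion $\mathbf{K}=\bigcup_n\mathbf{A}_n$, $G=\mathrm{Aut}(\mathbf{K})$ and $H_m=\mathrm{Emb}(\mathbf{A}_m,\mathbf{K})$. Let $\mathcal{K}^*$ be an expansion of $\mathcal{K}$ such that the pair $(\mathcal{K}^*,\mathcal{K})$ is excellent. Then a set $S\subseteq H_m$ is minimal if and only if there are $\mathbf{K}'\in X_{\mathcal{K}^*}$ and $E\subseteq\mathcal{K}^*(\mathbf{A}_m)$ such that $S=H_m(E,\mathbf{K}')$.
   Context: $L^*=L\cup\{S_i\}$ adds new relation symbols; a class $\mathcal{K}^*$ of finite $L^*$-structures closed under isomorphism is an expansion of $\mathcal{K}$ if $\{\mathbf{A}^*|_L:\mathbf{A}^*\in\mathcal{K}^*\}=\mathcal{K}$; $\mathcal{K}^*(\mathbf{A})$ is the set of expansions of $\mathbf{A}$ lying in $\mathcal{K}^*$. The pair is excellent if: $\mathcal{K}^*$ is a Fraïssé class; it is precompact ($\mathcal{K}^*(\mathbf{A})$ finite for each $\mathbf{A}\in\mathcal{K}$); reasonable (for $\mathbf{A},\mathbf{B}\in\mathcal{K}$, an embedding $f:\mathbf{A}\to\mathbf{B}$ and $\mathbf{A}^*\in\mathcal{K}^*(\mathbf{A})$ there is $\mathbf{B}^*\in\mathcal{K}^*(\mathbf{B})$ with $f:\mathbf{A}^*\to\mathbf{B}^*$ an embedding); has the expansion property (for each $\mathbf{A}^*\in\mathcal{K}^*$ there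 is $\mathbf{B}\in\mathcal{K}$ such that every $\mathbf{B}^*\in\mathcal{K}^*(\mathbf{B})$ embeds $\mathbf{A}^*$); and $\mathcal{K}^*$ has the Ramsey property (for $\mathbf{A}\leq\mathbf{B}$ in $\mathcal{K}^*$ and $r\geq2$ there is $\mathbf{C}\in\mathcal{K}^*$ with $\mathbf{B}\leq\mathbf{C}$ such that every $c:\mathrm{Emb}(\mathbf{A},\mathbf{C})\to r$ is constant on $h\circ\mathrm{Emb}(\mathbf{A},\mathbf{B})$ for some $h\in\mathrm{Emb}(\mathbf{B},\mathbf{C})$). $X_{\mathcal{K}^*}$ is the set of $L^*$-expansions $\mathbf{K}'=\langle\mathbf{K},\vec S\rangle$ of $\mathbf{K}$ all of whose finite substructures lie in $\mathcal{K}^*$, topologized by basic open sets $\{\mathbf{K}':\mathbf{A}^*\subseteq\mathbf{K}'\}$, with the right $G$-action $S^{\mathbf{K}'g}(x_1,\dots,x_k)\iff S^{\mathbf{K}'}(g(x_1),\dots,g(x_k))$. For $f\in H_m$, $\mathbf{K}'\cdot f$ is the unique expansion of $\mathbf{A}_m$ with $f\in\mathrm{Emb}(\mathbf{K}'\cdot f,\mathbf{K}')$, and $H_m(E,\mathbf{K}')=\{f\in H_m:\mathbf{K}'\cdot f\in E\}$. Identify subsets of $H_m$ with $2^{H_m}$, on which $G$ acts on the right by $(\chi\cdot g)(f)=\chi(g\circ f)$. $S\subseteq H_m$ is minimal if the orbit closure $\overline{\chi_S\cdot G}\subseteq 2^{H_m}$ is a minimal $G$-flow (every orbit dense). *)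

(* Defs.v *)
From Stdlib Require List.
From mathcomp Require Import all_boot.
Set Implicit Arguments. Unset Strict Implicit. Unset Printing Implicit Defensive.

Record struc (L : Type) (ar : L -> nat) (T : Type) := Struc {
  rel : forall s : L, (ar s).-tuple T -> bool }.
Arguments Struc {L ar T}.
Arguments rel {L ar T}.

Section Structures.
Variables (L : Type) (ar : L -> nat).

Definition emb (TA TB : Type) (A : struc ar TA) (B : struc ar TB) (f : TA -> TB) :=
  injective f /\ forall s (x : (ar s).-tuple TA), rel B s (map_tuple f x) = rel A s x.

Definition iso (TA TB : Type) (A : struc ar TA) (B : struc ar TB) (f : TA -> TB) :=
  bijective f /\ emb A B f.

Definition pullback (TA TB : Type) (B : struc ar TB) (f : TA -> TB) : struc ar TA :=
  Struc (fun s x => rel B s (map_tuple f x)).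

Definition induced (U : countType) (M : struc ar U) (s : seq U) : struc ar (seq_sub s) :=
  pullback M val.

Definition cls := forall T : finType, struc ar T -> Prop.

Definition iso_closed (K : cls) :=
  forall (TA TB : finType) (A : struc ar TA) (B : struc ar TB) f, iso A B f -> K TA A -> K TB B.

Definition hereditary (K : cls) :=
  forall (TA TB : finType) (A : struc ar TA) (B : struc ar TB) f, emb A B f -> K TB B -> K TA A.

Definition joint_embedding (K : cls) :=
  forall (TA TB : finType) (A : struc ar TA) (B : struc ar TB), K TA A -> K TB B ->
  exists (TC : finType) (C : struc ar TC) f g, [/\ K TC C, emb A C f & emb B C g].

Definition amalgamation (K : cls) :=
  forall (TA TB TC : finType) (A : struc ar TA) (B : struc ar TB) (C : struc ar TC) f g,
  K TA A -> K TB B -> K TC C -> emb A B f -> emb A C g ->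
  exists (TD : finType) (D : struc ar TD) f' g',
    [/\ K TD D, emb B D f', emb C D g' & forall x, f' (f x) = g' (g x)].

Definition countably_many_iso_types (K : cls) :=
  exists F : nat -> {T : finType & struc ar T},
  forall (T : finType) (A : struc ar T), K T A -> exists n f, iso A (projT2 (F n)) f.

Definition arbitrarily_large (K : cls) :=
  forall n, exists (T : finType) (A : struc ar T), K T A /\ n <= #|T|.

(* Fraisse class (convention of Kechris-Pestov-Todorcevic) *)
Definition fraisse_class (K : cls) :=
  [/\ iso_closed K, hereditary K, joint_embedding K, amalgamation K &
      countably_many_iso_types K /\ arbitrarily_large K].

Definition aut (U : Type) (M : struc ar U) (g : U -> U) := iso M M g.

Definition fraisse_limit (K : cls) (U : countType) (M : struc ar U) :=
  (forall (T : finType) (A : struc ar T), K T A <-> exists f, emb A M f) /\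
  (forall (T : finType) (A : struc ar T) f g, emb A M f -> emb A M g ->
     exists h, aut M h /\ forall x, h (f x) = g x).

Definition ramsey (K : cls) :=
  forall (TA TB : finType) (A : struc ar TA) (B : struc ar TB) (r : nat),
  K TA A -> K TB B -> (exists e, emb A B e) -> 2 <= r ->
  exists (TC : finType) (C : struc ar TC),
    [/\ K TC C, (exists e, emb B C e) &
        forall c : (TA -> TC) -> 'I_r, exists h, emb B C h /\
          forall f g, emb A B f -> emb A B g -> c (h \o f) = c (h \o g)].

End Structures.

Definition exhaustion (U : countType) (A : nat -> seq U) :=
  (forall n, {subset A n <= A n.+1}) /\ (forall x, exists n, x \in A n).

Section Expansions.
Variables (L L' : Type) (ar : L -> nat) (ar' : L' -> nat).

Definition sum_ar (s : L + L') : nat :=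
  match s with inl a => ar a | inr b => ar' b end.

Definition is_expansion (T : Type) (As : struc (sum_ar) T) (A : struc ar T) :=
  forall s (x : (ar s).-tuple T), rel As (inl s) x = rel A s x.

Definition Kstar (Ks : cls sum_ar) (T : finType) (A : struc ar T) (As : struc sum_ar T) :=
  Ks T As /\ is_expansion As A.

Definition expansion_of (K : cls ar) (Ks : cls sum_ar) :=
  iso_closed Ks /\
  forall (T : finType) (A : struc ar T), K T A <-> exists As, Kstar Ks A As.

Definition precompact (K : cls ar) (Ks : cls sum_ar) :=
  forall (T : finType) (A : struc ar T), K T A ->
  exists l : list (struc sum_ar T), forall As, Kstar Ks A As -> List.In As l.

Definition reasonable (K : cls ar) (Ks : cls sum_ar) :=
  forall (TA TB : finType) (A : struc ar TA) (B : struc ar TB) f As,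
  K TA A -> K TB B -> emb A B f -> Kstar Ks A As ->
  exists Bs, Kstar Ks B Bs /\ emb As Bs f.

Definition expansion_property (K : cls ar) (Ks : cls sum_ar) :=
  forall (TA : finType) (As : struc sum_ar TA), Ks TA As ->
  exists (TB : finType) (B : struc ar TB), K TB B /\
    forall Bs, Kstar Ks B Bs -> exists f, emb As Bs f.

Definition excellent (K : cls ar) (Ks : cls sum_ar) :=
  [/\ fraisse_class Ks, precompact K Ks, reasonable K Ks,
      expansion_property K Ks & ramsey Ks].

Definition X_Kstar (Ks : cls sum_ar) (U : countType) (M : struc ar U)
  (K' : struc sum_ar U) :=
  is_expansion K' M /\ forall s : seq U, Ks _ (induced K' s).

End Expansions.

Section Flow.
Variables (L : Type) (ar : L -> nat) (U : countType) (M : struc ar U) (s : seq U).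

Definition Hemb (f : seq_sub s -> U) := emb (induced M s) M f.

(* points of 2^H are represented by predicates on maps; only values on H matter.
   (chi . g)(f) = chi (g o f).  Topology: product topology, basic neighbourhoods
   of chi are given by finite subsets F of H. *)
Definition point := (seq_sub s -> U) -> Prop.

Definition in_orbit_closure (psi phi : point) :=
  forall F : seq (seq_sub s -> U), (forall f, List.In f F -> Hemb f) ->
  exists g, aut M g /\ forall f, List.In f F -> (phi f <-> psi (g \o f)).

Definition minimal_set (S : point) :=
  forall psi phi, in_orbit_closure S psi -> in_orbit_closure S phi ->
  in_orbit_closure psi phi.

End Flow.

(* Main.v *)
Require Import Defs.
From mathcomp Require Import all_boot.
Require Import Defs.
From Stdlib Require Import FunctionalExtensionality ClassicalEpsilon Classical.
Set Implicit Arguments. Unset Strict Implicit. Unset Printing Implicit Defensive.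

Definition decP (P : Prop) : bool := if excluded_middle_informative P then true else false.
Lemma decPE (P : Prop) : decP P = true <-> P.
Proof. by rewrite /decP; case: excluded_middle_informative. Qed.

Section Basic.
Variables (L : Type) (ar : L -> nat).

Lemma struc_ext (T : Type) (C D : struc ar T) :
  (forall s x, rel C s x = rel D s x) -> C = D.
Proof.
case: C => c; case: D => d /= H; congr Struc.
apply: functional_extensionality_dep => s; apply: functional_extensionality => x; exact: H.
Qed.

Lemma map_tupleC (T1 T2 T3 : Type) n (f : T1 -> T2) (g : T2 -> T3) (x : n.-tuple T1) :
  map_tuple (g \o f) x = map_tuple g (map_tuple f x).
Proof. by apply: val_inj => /=; rewrite map_comp. Qed.

Lemma map_tuple_ext (T1 T2 : Type) n (f g : T1 -> T2) (x : n.-tuple T1) :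
  f =1 g -> map_tuple f x = map_tuple g x.
Proof. by move=> H; apply: val_inj => /=; apply: eq_map. Qed.

Lemma pullback_comp (T1 T2 T3 : Type) (C : struc ar T3) (g : T2 -> T3) (f : T1 -> T2) :
  pullback C (g \o f) = pullback (pullback C g) f.
Proof. by apply: struc_ext => s x /=; rewrite map_tupleC. Qed.

Lemma pullback_ext (T1 T2 : Type) (C : struc ar T2) (f g : T1 -> T2) :
  f =1 g -> pullback C f = pullback C g.
Proof. by move=> H; apply: struc_ext => s x /=; rewrite (map_tuple_ext _ H). Qed.

Lemma emb_comp (T1 T2 T3 : Type) (A : struc ar T1) (B : struc ar T2) (C : struc ar T3) f g :
  emb A B f -> emb B C g -> emb A C (g \o f).
Proof.
move=> [If Rf] [Ig Rg]; split; first exact: inj_comp.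
by move=> s x; rewrite map_tupleC Rg Rf.
Qed.

Lemma emb_id (T : Type) (A : struc ar T) : emb A A id.
Proof. split=> // s x; congr (rel A s); by apply: val_inj; rewrite /= map_id. Qed.

Lemma emb_pullback (T1 T2 : Type) (C : struc ar T2) (f : T1 -> T2) :
  injective f -> emb (pullback C f) C f.
Proof. by move=> If; split. Qed.

Lemma emb_ext (T1 T2 : Type) (A : struc ar T1) (B : struc ar T2) f g :
  f =1 g -> emb A B f -> emb A B g.
Proof.
move=> E [If Rf]; split.
  by move=> x y; rewrite -!E; apply: If.
by move=> s x; rewrite -(map_tuple_ext _ E).
Qed.

Lemma aut_emb (U : Type) (M : struc ar U) g : aut M g -> emb M M g.
Proof. by case. Qed.

Lemma emb_induced_val (U : countType) (M : struc ar U) (s : seq U) :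
  emb (induced M s) M val.
Proof. by split=> //; apply: val_inj. Qed.

Lemma lift_seq (U : eqType) (s : seq U) (x : seq U) :
  all (mem s) x -> exists t : seq (seq_sub s), map val t = x.
Proof.
elim: x => [|y x IH] /=; first by exists [::].
case/andP=> ys /IH [t Ht]; exists (SeqSub ys :: t); by rewrite /= Ht.
Qed.

Lemma lift_tuple (U : eqType) (s : seq U) n (x : n.-tuple U) :
  all (mem s) x -> exists t : n.-tuple (seq_sub s), map_tuple val t = x.
Proof.
case/lift_seq=> t Ht.
have St : size t == n by rewrite -(size_map val) Ht size_tuple.
exists (Tuple St); exact: val_inj.
Qed.

Lemma In_mem (T : eqType) (x : T) (s : seq T) : x \in s -> List.In x s.
Proof. elim: s => //= y s IH; rewrite in_cons; case/orP => [/eqP->|/IH]; auto. Qed.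

Lemma In_map (T1 T2 : Type) (f : T1 -> T2) x s : List.In x s -> List.In (f x) (map f s).
Proof. elim: s => //= y s IH [->|/IH]; auto. Qed.

Lemma In_filter (T : Type) (p : pred T) x s : List.In x s -> p x -> List.In x (filter p s).
Proof. elim: s => [|y s IH] //= Hx px.
case: Hx => [Ey|Hs].
  by subst y; rewrite px; left.
by case: (p y); [right|]; apply: IH. Qed.

Lemma In_filter_p (T : Type) (p : pred T) x s : List.In x (filter p s) -> p x.
Proof.
elim: s => [|y s IH] //=.
case E: (p y) => H; last exact: (IH H).
case: H => [Ey|H]; first by rewrite -Ey.
exact: (IH H).
Qed.

End Basic.

Section AllMaps.
Variables (T : finType) (U : countType).
Definition allmaps (t : seq U) : seq (T -> U) :=
  map (fun ff : {ffun T -> seq_sub t} => (fun x => val (ff x))) (enum [set: {ffun T -> seq_sub t}]).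

Lemma allmapsP (t : seq U) (f : T -> U) : (forall x, f x \in t) -> List.In f (allmaps t).
Proof.
move=> H.
have -> : f = (fun x => val ([ffun x => SeqSub (H x)] x)).
  by apply: functional_extensionality => x; rewrite ffunE.
apply: (In_map (fun ff : {ffun T -> seq_sub t} => fun x => val (ff x))).
by apply: In_mem; rewrite mem_enum in_setT.
Qed.
End AllMaps.


Section Main.
Unset Implicit Arguments.
Variables (L L' : Type) (ar : L -> nat) (ar' : L' -> nat)
  (K : cls ar) (Ks : cls (sum_ar ar ar'))
  (U : countType) (M : struc ar U) (A : nat -> seq U).
Hypotheses (HK : fraisse_class K) (Hlim : fraisse_limit K M) (HA : exhaustion A)
  (Hexp : expansion_of K Ks) (Hexc : excellent K Ks).
Set Implicit Arguments.

Local Notation sar := (sum_ar ar ar').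
Local Notation X := (X_Kstar Ks M).

Lemma KsH : hereditary Ks.
Proof. by case: Hexc => [[]]. Qed.

Lemma age (T : finType) (B : struc ar T) : K T B <-> exists f, emb B M f.
Proof. by case: Hlim => H _; apply: H. Qed.

Lemma induced_K (s : seq U) : K _ (induced M s).
Proof. by apply/age; exists val; apply: emb_induced_val. Qed.

Lemma uhom (T : finType) (B : struc ar T) f g : emb B M f -> emb B M g ->
  exists h, aut M h /\ forall x, h (f x) = g x.
Proof. by case: Hlim => _ H; apply: H. Qed.

Lemma exh_mono a b : a <= b -> {subset A a <= A b}.
Proof.
move/subnK => <-; elim: (b - a) => [|k IH] x Hx; first by rewrite add0n.
rewrite addSn; apply: HA.1; exact: IH.
Qed.

Lemma exh_seq (s : seq U) : exists n, {subset s <= A n}.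
Proof.
elim: s => [|y s [n Hn]]; first by exists 0.
case: (HA.2 y) => k Hk; exists (maxn n k) => x; rewrite in_cons.
case/orP => [/eqP->|/Hn H].
  by apply: (exh_mono (leq_maxr n k)).
by apply: (exh_mono (leq_maxl n k)).
Qed.

Lemma pullback_Ks (K0 : struc sar U) (T : finType) (e : T -> U) :
  X K0 -> injective e -> Ks T (pullback K0 e).
Proof.
move=> [_ HX] Ie.
have mk x : e x \in map e (enum T) by rewrite map_f ?mem_enum.
apply: (@KsH _ _ _ _ (fun x => SeqSub (mk x)) _ (HX (map e (enum T)))).
split.
  by move=> x y /(congr1 val) /= /Ie.
move=> s x /=; congr (rel K0 s); apply: val_inj => /=; by rewrite -map_comp.
Qed.

Lemma exp_pullback (K0 : struc sar U) (T : Type) (B : struc ar T) e :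
  is_expansion K0 M -> emb B M e -> is_expansion (pullback K0 e) B.
Proof. by move=> HE [_ Re] s x /=; rewrite HE Re. Qed.

Lemma reduct_emb (T1 T2 : Type) (As : struc sar T1) (Bs : struc sar T2)
  (A1 : struc ar T1) (B1 : struc ar T2) f :
  is_expansion As A1 -> is_expansion Bs B1 -> emb As Bs f -> emb A1 B1 f.
Proof. by move=> EA EB [If Rf]; split => // s x; rewrite -EB Rf EA. Qed.

Lemma K0_univ (K0 : struc sar U) (T : finType) (C : struc sar T) :
  X K0 -> Ks T C -> exists j, emb C K0 j.
Proof.
move=> HX HC; case: Hexc => _ _ _ Hep _.
case: (Hep _ _ HC) => TB [B [KB HB]].
case/age: KB => e He.
case: (HB (pullback K0 e)).
  split; first by apply: pullback_Ks => //; case: He.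
  exact: exp_pullback HX.1 He.
move=> f Hf; exists (e \o f); apply: emb_comp Hf _.
by apply: emb_pullback; case: He.
Qed.

Lemma aut_exp (K0 : struc sar U) g : is_expansion K0 M -> aut M g ->
  is_expansion (pullback K0 g) M.
Proof. by move=> HE /aut_emb Hg; apply: exp_pullback. Qed.

End Main.


Definition imgs (T : finType) (U : Type) (F : seq (T -> U)) :=
  flatten (map (fun f => map f (enum T)) F).
Lemma in_flatten_maps (T : finType) (U : eqType) (F : seq (T -> U)) f x :
  List.In f F -> f x \in imgs F.
Proof.
elim: F => //= f0 F IH [->|/IH H]; rewrite mem_cat ?H ?orbT //.
by rewrite map_f ?mem_enum.
Qed.

Lemma aut_inj (T : Type) (L : Type) (ar : L -> nat) (M : struc ar T) g : aut M g -> injective g.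
Proof. by case=> /bij_inj. Qed.

Section Back.
Unset Implicit Arguments.
Variables (L L' : Type) (ar : L -> nat) (ar' : L' -> nat)
  (K : cls ar) (Ks : cls (sum_ar ar ar'))
  (U : countType) (M : struc ar U) (A : nat -> seq U).
Hypotheses (HK : fraisse_class K) (Hlim : fraisse_limit K M) (HA : exhaustion A)
  (Hexp : expansion_of K Ks) (Hexc : excellent K Ks).
Set Implicit Arguments.
Local Notation sar := (sum_ar ar ar').
Local Notation X := (X_Kstar Ks M).

Lemma backward (m : nat) (S : (seq_sub (A m) -> U) -> Prop) (K' : struc sar U)
  (HX : X K') (E : struc sar (seq_sub (A m)) -> Prop)
  (HSE : forall f, S f <-> Hemb M f /\ E (pullback K' f)) : minimal_set M S.
Proof.
move=> psi phi Hpsi Hphi F HF.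
case: (Hphi F HF) => g1 [Ag1 H1].
pose s1 := imgs F.
pose s := map g1 s1.
pose D := induced K' s.
have HD : Ks _ D := HX.2 s.
case: Hexc => _ _ _ Hep _.
case: (Hep _ _ HD) => TB [B [KB HB]].
have [e He] := (age Hlim B).1 KB.
pose F' := filter (fun f => decP (Hemb M f)) (allmaps (seq_sub (A m)) (map e (enum TB))).
have HF' : forall f, List.In f F' -> Hemb M f.
  by move=> f Hf; apply/decPE; exact: (In_filter_p Hf).
case: (Hpsi F' HF') => g2 [Ag2 H2].
pose Bs := pullback K' (g2 \o e).
have Ie : injective e by case: He.
have HBs : Kstar Ks B Bs.
  split; first by exact: (pullback_Ks Hexc HX (inj_comp (aut_inj Ag2) Ie)).
  exact: exp_pullback HX.1 (emb_comp He (aut_emb Ag2)).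
case: (HB Bs HBs) => h Hh.
have mk : forall x : seq_sub s1, g1 (val x) \in s by move=> x; rewrite map_f ?(valP x).
pose io := fun x : seq_sub s1 => SeqSub (mk x).
have Hio : emb (induced M s1) (induced M s) io.
  split.
    by move=> x y /(congr1 val) /= /(aut_inj Ag1) /val_inj.
  move=> sy x /=.
  have -> : map_tuple val (map_tuple io x) = map_tuple g1 (map_tuple val x).
    by apply: val_inj => /=; rewrite -!map_comp; apply: eq_map.
  by case: (aut_emb Ag1) => _ ->.
have Hh' : emb (induced M s) B h.
  apply: reduct_emb Hh => //; last exact: HBs.2.
  by move=> sy x /=; rewrite HX.1.
pose kk := e \o (h \o io).
have Hkk : emb (induced M s1) M kk by apply: emb_comp (emb_comp Hio Hh') He.
case: (uhom Hlim (emb_induced_val M s1) Hkk) => g [Ag Hg].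
exists g; split => // f Hf.
have inF : forall x0, f x0 \in s1 by move=> x0; apply: in_flatten_maps.
have Hgf : forall x0, g (f x0) = kk (SeqSub (inF x0)) by move=> x0; rewrite -Hg.
have HgF' : List.In (g \o f) F'.
  apply: In_filter; last by apply/decPE; apply: emb_comp (HF f Hf) (aut_emb Ag).
  apply: allmapsP => x0 /=; rewrite Hgf /kk /=; by rewrite map_f ?mem_enum.
rewrite H1 // H2 // !HSE.
have -> : pullback K' (g2 \o (g \o f)) = pullback K' (g1 \o f).
  apply: struc_ext => sy x /=.
  pose w := fun x0 => io (SeqSub (inF x0)).
  have -> : map_tuple (g2 \o (g \o f)) x = map_tuple (g2 \o e) (map_tuple h (map_tuple w x)).
    apply: val_inj => /=; rewrite -!map_comp; apply: eq_map => x0 /=; by rewrite Hgf.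
  have -> : rel K' sy (map_tuple (g2 \o e) (map_tuple h (map_tuple w x)))
     = rel Bs sy (map_tuple h (map_tuple w x)) by [].
  rewrite Hh.2 /=; congr (rel K' sy); apply: val_inj => /=; rewrite -map_comp.
  by apply: eq_map.
split; case=> _ HE; split => //.
  exact: emb_comp (emb_comp (HF f Hf) (aut_emb Ag)) (aut_emb Ag2).
exact: emb_comp (HF f Hf) (aut_emb Ag1).
Qed.
End Back.


Section Incl.
Variables (L : Type) (ar : L -> nat) (U : countType).

Definition incl (s1 s2 : seq U) (H : {subset s1 <= s2}) (x : seq_sub s1) : seq_sub s2 :=
  SeqSub (H _ (valP x)).

Lemma incl_emb (C : struc ar U) s1 s2 (H : {subset s1 <= s2}) :
  emb (induced C s1) (induced C s2) (incl H).
Proof.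
split; first by move=> x y /(congr1 val) /= /val_inj.
move=> sy x /=; congr (rel C sy); apply: val_inj => /=; rewrite -map_comp; exact: eq_map.
Qed.

Lemma induced_agree (C C' : struc ar U) (s : seq U) sy (x : (ar sy).-tuple U) :
  induced C s = induced C' s -> all (mem s) x -> rel C sy x = rel C' sy x.
Proof.
move=> E /lift_tuple [t <-].
exact: (congr1 (fun D => rel D sy t) E).
Qed.

Lemma induced_down (C C' : struc ar U) s1 s2 : {subset s1 <= s2} ->
  induced C s2 = induced C' s2 -> induced C s1 = induced C' s1.
Proof.
move=> H E; apply: struc_ext => sy x /=; apply: (induced_agree E).
by apply/allP => y /mapP [z _ ->]; apply: H; apply: valP.
Qed.
End Incl.

Section Compact.
Unset Implicit Arguments.
Variables (L L' : Type) (ar : L -> nat) (ar' : L' -> nat)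
  (K : cls ar) (Ks : cls (sum_ar ar ar'))
  (U : countType) (M : struc ar U) (A : nat -> seq U).
Hypotheses (HK : fraisse_class K) (Hlim : fraisse_limit K M) (HA : exhaustion A)
  (Hexp : expansion_of K Ks) (Hexc : excellent K Ks).
Local Notation sar := (sum_ar ar ar').
Local Notation X := (X_Kstar Ks M).
Variable Q : nat -> struc sar U -> Prop.
Hypothesis Qinv : forall n C C', induced C (A n) = induced C' (A n) -> Q n C -> Q n C'.
Hypothesis Qdown : forall n C, Q n.+1 C -> Q n C.
Set Implicit Arguments.

Definition P n C := Kstar Ks (induced M (A n)) (induced C (A n)) /\ Q n C.
Hypothesis Qex : forall n, exists C, P n C.

Lemma Pinv n C C' : induced C (A n) = induced C' (A n) -> P n C -> P n C'.
Proof. by move=> E [H1 H2]; split; [rewrite -E | apply: Qinv E H2]. Qed.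

Lemma Pdown1 n C : P n.+1 C -> P n C.
Proof.
move=> [[H1 H2] H3]; split; last exact: Qdown.
have Hs := HA.1 n.
split.
  apply: (KsH Hexc _ H1); exact: incl_emb Hs.
move=> sy x.
rewrite -(incl_emb C Hs).2 H2 (incl_emb M Hs).2 //.
Qed.

Lemma Pdown n k C : P (n + k) C -> P n C.
Proof. elim: k => [|k IH]; rewrite ?addn0 // addnS => /Pdown1; exact: IH. Qed.

Definition Good n C := forall k, exists C'', P (n + k) C'' /\ induced C'' (A n) = induced C (A n).

Lemma step n (R : struc sar U -> Prop) :
  (forall k, exists C'', P (n + k) C'' /\ R C'') -> exists C', R C' /\ Good n C'.
Proof.
move=> HR; apply: NNPP => H.
case: Hexc => _ Hpc _ _ _.
case: (Hpc _ _ (induced_K Hlim (A n))) => l Hl.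
pose bad (D : struc sar (seq_sub (A n))) k :=
  forall C'', P (n + k) C'' -> R C'' -> induced C'' (A n) <> D.
have badk : forall D, exists k, bad D k.
  move=> D; case: (classic (exists C', R C' /\ induced C' (A n) = D)).
    case=> C' [RC' ED].
    have : ~ Good n C' by move=> G; apply: H; exists C'.
    case/not_all_ex_not => k Hk; exists k => C'' PC RC EC.
    by apply: Hk; exists C''; split => //; rewrite EC ED.
  move=> NE; exists 0 => C'' _ RC EC; apply: NE; by exists C''.
have badm : forall D k k', k <= k' -> bad D k -> bad D k'.
  move=> D k k' /subnK <- Hb C'' PC; apply: Hb.
  by move: PC; rewrite [k' - k + k]addnC addnA; apply: Pdown.
have : exists k, forall D, List.In D l -> bad D k.
  elim: l {Hl} => [|D l [k Hk]]; first by exists 0.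
  case: (badk D) => k' Hk'; exists (maxn k k') => D' /= [<-|HD'].
    exact: badm (leq_maxr _ _) Hk'.
  exact: badm (leq_maxl _ _) (Hk _ HD').
case=> k Hk.
case: (HR k) => C'' [PC RC].
have HIn : List.In (induced C'' (A n)) l by apply: Hl; exact: (Pdown PC).1.
exact: (Hk _ HIn C'' PC RC erefl).
Qed.

Lemma good0 : exists C, Good 0 C.
Proof.
have [C [_ G]] := @step 0 (fun _ => True) (fun k => let: ex_intro C PC := Qex k in ex_intro _ C (conj PC I)).
by exists C.
Qed.

Lemma goodS n C : Good n C -> exists C', induced C' (A n) = induced C (A n) /\ Good n.+1 C'.
Proof.
move=> G; apply: step => k.
case: (G k.+1) => C'' [PC EC]; exists C''; split => //.
by rewrite addSn -addnS.
Qed.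

Definition C0 : {C | Good 0 C} := constructive_indefinite_description _ good0.
Definition CS n (C : {C | Good n C}) : {C | Good n.+1 C} :=
  let q := constructive_indefinite_description _ (goodS (proj2_sig C)) in
  exist _ (proj1_sig q) (proj2 (proj2_sig q)).
Lemma CS_agree n (C : {C | Good n C}) :
  induced (proj1_sig (CS C)) (A n) = induced (proj1_sig C) (A n).
Proof. rewrite /CS /=; destruct (constructive_indefinite_description _ _) as [C' [E G]]; exact: E. Qed.

Fixpoint Cs n : {C | Good n C} := match n with 0 => C0 | n'.+1 => CS (Cs n') end.

Lemma Cs_coh a b : a <= b -> induced (proj1_sig (Cs b)) (A a) = induced (proj1_sig (Cs a)) (A a).
Proof.
elim: b => [|b IH]; first by rewrite leqn0 => /eqP->.
rewrite leq_eqVlt; case/orP => [/eqP->|Hab] //.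
rewrite ltnS in Hab; rewrite -(IH Hab).
apply: (induced_down (exh_mono HA Hab)).
exact: (CS_agree (Cs b)).
Qed.

Definition Nlev (x : seq U) : nat := proj1_sig (constructive_indefinite_description _ (exh_seq HA x)).
Lemma NlevP x : {subset x <= A (Nlev x)}.
Proof. rewrite /Nlev; destruct (constructive_indefinite_description _ _) as [n Hn]; exact: Hn. Qed.

Definition Klim : struc sar U := Struc (fun sy x => rel (proj1_sig (Cs (Nlev x))) sy x).

Lemma Klim_agree n : induced Klim (A n) = induced (proj1_sig (Cs n)) (A n).
Proof.
apply: struc_ext => sy t /=.
set x := map_tuple val t.
have Hn : all (mem (A n)) x by apply/allP => y /mapP [z _ ->]; apply: valP.
have HN : all (mem (A (Nlev x))) x by apply/allP => y /NlevP.
case: (leqP (Nlev x) n) => H.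
  by apply: (induced_agree (esym (Cs_coh H))).
by apply: (induced_agree (Cs_coh (ltnW H))).
Qed.

Lemma compact : exists K', X K' /\ forall n, Q n K'.
Proof.
have PK : forall n, P n Klim.
  move=> n; case: (proj2_sig (Cs n) 0) => C'' [PC EC].
  apply: (Pinv _ (Pdown (n:=n) (k:=0) PC)).
  by rewrite EC Klim_agree.
exists Klim; split; last by move=> n; case: (PK n).
split.
  move=> sy x.
  case: (exh_seq HA x) => n Hn.
  have /lift_tuple [t <-] : all (mem (A n)) x by apply/allP.
  exact: (PK n).1.2.
move=> s; case: (exh_seq HA s) => n Hn.
apply: (KsH Hexc _ (PK n).1.1); exact: incl_emb Hn.
Qed.
End Compact.


Lemma In_nth (T : Type) (d a : T) (l : seq T) : List.In a l -> exists i : 'I_(size l), nth d l i = a.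
Proof.
have : List.In a l -> exists i, i < size l /\ nth d l i = a.
  elim: l => //= b l IH [->|/IH [i [Hi Ei]]]; first by exists 0.
  by exists i.+1.
move=> H /H [i [Hi Ei]]; by exists (Ordinal Hi).
Qed.

Section Ram.
Unset Implicit Arguments.
Variables (L L' : Type) (ar : L -> nat) (ar' : L' -> nat)
  (K : cls ar) (Ks : cls (sum_ar ar ar'))
  (U : countType) (M : struc ar U) (A : nat -> seq U).
Hypotheses (HK : fraisse_class K) (Hlim : fraisse_limit K M) (HA : exhaustion A)
  (Hexp : expansion_of K Ks) (Hexc : excellent K Ks).
Set Implicit Arguments.
Local Notation sar := (sum_ar ar ar').
Local Notation X := (X_Kstar Ks M).

Lemma Rstar (TA : finType) (l : seq (struc sar TA)) (TB : finType) (B : struc sar TB) :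
  Ks TB B ->
  exists (TC : finType) (C : struc sar TC), Ks TC C /\
    forall c : (TA -> TC) -> bool, exists h, emb B C h /\
      forall a, List.In a l -> Ks TA a -> forall f g, emb a B f -> emb a B g ->
        c (h \o f) = c (h \o g).
Proof.
move=> KB; elim: l => [|a l [TC' [C' [KC' IH]]]].
  exists TB, B; split => // c; exists id; split; first exact: emb_id.
  by [].
case: (classic (Ks TA a /\ exists e, emb a C' e)) => [[Ka Ea]|Na].
  case: Hexc => _ _ _ _ Hr.
  case: (Hr _ _ a C' 2 Ka KC' Ea (leqnn 2)) => TC [C [KC _ HC]].
  exists TC, C; split => // c.
  pose c' := fun phi : TA -> TC => if c phi then (ord0 : 'I_2) else ord_max.
  have c'E : forall phi psi, c' phi = c' psi -> c phi = c psi.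
    by rewrite /c' => phi psi; case: (c phi); case: (c psi).
  case: (HC c') => h1 [Hh1 Hom1].
  case: (IH (fun phi => c (h1 \o phi))) => h0 [Hh0 Hom0].
  exists (h1 \o h0); split; first exact: emb_comp Hh0 Hh1.
  move=> a' /= [<-|Ha'] Ka' f g Hf Hg.
    apply: c'E; exact: (Hom1 _ _ (emb_comp Hf Hh0) (emb_comp Hg Hh0)).
  exact: (Hom0 a' Ha' Ka' f g Hf Hg).
exists TC', C'; split => // c.
case: (IH c) => h0 [Hh0 Hom0]; exists h0; split => //.
move=> a' /= [<-|Ha'] Ka' f g Hf Hg.
  by exfalso; apply: Na; split => //; exists (h0 \o f); exact: emb_comp Hf Hh0.
exact: (Hom0 a' Ha' Ka' f g Hf Hg).
Qed.

Lemma ramsey_level (m : nat) (S : (seq_sub (A m) -> U) -> Prop) (K0 : struc sar U)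
  (HX0 : X K0) (l : seq (struc sar (seq_sub (A m))))
  (Hl : forall As, Kstar Ks (induced M (A m)) As -> List.In As l) (n : nat) :
  exists g, aut M g /\ exists E : struc sar (seq_sub (A m)) -> Prop,
    forall f, Hemb M f -> (forall x, f x \in A n) -> (S (g \o f) <-> E (pullback K0 f)).
Proof.
pose B0 := induced K0 (A n).
have KB0 : Ks _ B0 := HX0.2 (A n).
case: (Rstar l KB0) => TC [C [KC HR]].
case: (K0_univ Hlim Hexc HX0 KC) => j Hj.
case: (HR (fun phi => decP (S (j \o phi)))) => h [Hh Hom].
pose kk := j \o h.
have Hkk : emb B0 K0 kk by exact: emb_comp Hh Hj.
have Hkk' : emb (induced M (A n)) M kk.
  apply: reduct_emb Hkk => //; last exact: HX0.1.
  by move=> sy x /=; rewrite HX0.1.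
case: (uhom Hlim (emb_induced_val M (A n)) Hkk') => g [Ag Hg].
exists g; split => //.
exists (fun a => exists f', emb a B0 f' /\ S (kk \o f')).
move=> f Hf Hfn.
pose f' := fun x => (SeqSub (Hfn x) : seq_sub (A n)).
have Hf' : emb (pullback K0 f) B0 f'.
  split; first by move=> x y /(congr1 val) /= /(proj1 Hf).
  move=> sy x /=; congr (rel K0 sy); apply: val_inj => /=; rewrite -map_comp; exact: eq_map.
have Ka : Kstar Ks (induced M (A m)) (pullback K0 f).
  split; first exact: (pullback_Ks Hexc HX0 (proj1 Hf)).
  exact: exp_pullback HX0.1 Hf.
have -> : g \o f = kk \o f'.
  by apply: functional_extensionality => x /=; rewrite -Hg.
split; first by move=> HS; exists f'.
case=> f'' [Hf'' HS].
have Heq : decP (S (j \o (h \o f''))) = decP (S (j \o (h \o f'))) :=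
  Hom _ (Hl _ Ka) Ka.1 f'' f' Hf'' Hf'.
apply/decPE; change (decP (S (j \o (h \o f'))) = true); rewrite -Heq; apply/decPE; exact: HS.
Qed.

Definition Ep (T : Type) (d : T) (l : seq T) (p : {ffun 'I_(size l) -> bool}) (a : T) :=
  exists i : 'I_(size l), nth d l i = a /\ p i.
Arguments Ep {T} d l p a.

Lemma pigeon (m : nat) (S : (seq_sub (A m) -> U) -> Prop) (K0 : struc sar U)
  (HX0 : X K0) (l : seq (struc sar (seq_sub (A m))))
  (Hl : forall As, Kstar Ks (induced M (A m)) As -> List.In As l) (d : struc sar (seq_sub (A m))) :
  exists p, forall n, exists g, aut M g /\
    forall f, Hemb M f -> (forall x, f x \in A n) -> (S (g \o f) <-> Ep d l p (pullback K0 f)).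
Proof.
pose G p n := exists g, aut M g /\
    forall f, Hemb M f -> (forall x, f x \in A n) -> (S (g \o f) <-> Ep d l p (pullback K0 f)).
have Gdown : forall p n n', n' <= n -> G p n -> G p n'.
  move=> p n n' Hn [g [Ag Hg]]; exists g; split => // f Hf Hfn.
  apply: Hg => // x; exact: (exh_mono HA Hn).
apply: NNPP => H.
have Hp : forall p, exists n, ~ G p n.
  move=> p; apply: NNPP => H'; apply: H; exists p => n; apply: NNPP => H''.
  by apply: H'; exists n.
pose np p := proj1_sig (constructive_indefinite_description _ (Hp p)).
have npP : forall p, ~ G p (np p).
  by move=> p; rewrite /np; destruct (constructive_indefinite_description _ _).
pose N := \max_p np p.
case: (ramsey_level S HX0 Hl N) => g [Ag [E HE]].
pose p0 : {ffun 'I_(size l) -> bool} := [ffun i : 'I_(size l) => decP (E (nth d l i))].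
apply: (npP p0); apply: (Gdown p0 N); first exact: leq_bigmax.
exists g; split => // f Hf Hfn; rewrite HE //.
have Ka : Kstar Ks (induced M (A m)) (pullback K0 f).
  split; first exact: (pullback_Ks Hexc HX0 (proj1 Hf)).
  exact: exp_pullback HX0.1 Hf.
split.
  move=> HEf; case: (In_nth d (Hl _ Ka)) => i Ei; exists i; split => //.
  by rewrite /p0 ffunE; apply/decPE; rewrite Ei.
case=> i [Ei]; rewrite /p0 ffunE => /decPE; by rewrite Ei.
Qed.
End Ram.
Arguments Ep {T} d l p a.


Section Ext.
Variables (L : Type) (ar : L -> nat) (U : countType).
Definition extS (s : seq U) (D : struc ar (seq_sub s)) : struc ar U :=
  Struc (fun sy x => match (insub (pmap insub (val x)) : option ((ar sy).-tuple (seq_sub s))) with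
                     | Some t => rel D sy t | None => false end).

Lemma pmap_insub_val (s : seq U) (t : seq (seq_sub s)) : pmap insub (map val t) = t.
Proof. by elim: t => //= y t ->; rewrite valK. Qed.

Lemma extS_induced (s : seq U) (D : struc ar (seq_sub s)) : induced (extS D) s = D.
Proof.
apply: struc_ext => sy t /=.
rewrite pmap_insub_val.
have -> : (insub (val t) : option ((ar sy).-tuple (seq_sub s))) = Some t by rewrite valK.
by [].
Qed.
End Ext.

Theorem mainTheorem5 (L L' : Type) (ar : L -> nat) (ar' : L' -> nat)
  (K : cls ar) (Ks : cls (sum_ar ar ar'))
  (U : countType) (M : struc ar U) (A : nat -> seq U)
  (HK : fraisse_class K) (Hlim : fraisse_limit K M) (HA : exhaustion A)
  (Hexp : expansion_of K Ks) (Hexc : excellent K Ks)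
  (m : nat) (S : (seq_sub (A m) -> U) -> Prop)
  (HS : forall f, S f -> Hemb M f) :
  minimal_set M S <->
  exists K' : struc (sum_ar ar ar') U, X_Kstar Ks M K' /\
  exists E : struc (sum_ar ar ar') (seq_sub (A m)) -> Prop,
    (forall As, E As -> Kstar Ks (induced M (A m)) As) /\
    (forall f, S f <-> (Hemb M f /\ E (pullback K' f))).
Proof.
split; last first.
  by case=> K' [HX' [E [_ HSE]]]; exact: (backward Hlim Hexc HX' HSE).
move=> Hmin.
have [K0 [HX0 _]] : exists K0, X_Kstar Ks M K0 /\ forall n : nat, (fun _ _ => True) n K0.
  apply: (compact Hlim HA Hexc) => // n.
  have [As HAs] := (Hexp.2 _ (induced M (A n))).1 (induced_K Hlim (A n)).
  by exists (extS As); split => //; rewrite extS_induced.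
have [_ Hpc _ _ _] := Hexc.
case: (Hpc _ _ (induced_K Hlim (A m))) => l Hl.
pose d := induced K0 (A m).
case: (pigeon Hlim HA Hexc S HX0 Hl d) => p Hp.
pose T0 := fun f => Hemb M f /\ Ep d l p (pullback K0 f).
have H1 : in_orbit_closure M S T0.
  move=> F HF; case: (exh_seq HA (imgs F)) => n Hn.
  case: (Hp n) => g [Ag Hg]; exists g; split => // f Hf.
  have Hfn : forall x, f x \in A n by move=> x; apply: Hn; apply: in_flatten_maps.
  rewrite (Hg f (HF f Hf) Hfn) /T0; split; [by case | by move=> H; split => //; apply: HF].
have H2 : in_orbit_closure M S S.
  move=> F HF; exists id; split => //; split; first by exists id.
  exact: emb_id.
have H3 := Hmin T0 S H1 H2.
have [K' [HX' HQ]] : exists K', X_Kstar Ks M K' /\ forall n, 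
    (fun n C => forall f, Hemb M f -> (forall x, f x \in A n) ->
       (S f <-> Ep d l p (pullback C f))) n K'.
  apply: (compact Hlim HA Hexc).
  - move=> n C C' EC HQ f Hf Hfn.
    have EP : pullback C f = pullback C' f.
      apply: struc_ext => sy x /=; apply: (induced_agree EC).
      by apply/allP => y /mapP [z _ ->]; apply: Hfn.
    by rewrite -EP; apply: HQ.
  - move=> n C HQ f Hf Hfn; apply: HQ => // x; exact: HA.1 (Hfn x).
  move=> n.
  pose Fn := filter (fun f => decP (Hemb M f)) (allmaps (seq_sub (A m)) (A n)).
  have HFn : forall f, List.In f Fn -> Hemb M f.
    by move=> f Hf; apply/decPE; exact: (In_filter_p Hf).
  case: (H3 Fn HFn) => g [Ag Hg].
  exists (pullback K0 g); split.
    rewrite /induced -pullback_comp; split.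
      exact: (pullback_Ks Hexc HX0 (inj_comp (aut_inj Ag) val_inj)).
    exact: exp_pullback HX0.1 (emb_comp (emb_induced_val M (A n)) (aut_emb Ag)).
  move=> f Hf Hfn.
  have InF : List.In f Fn.
    by apply: In_filter; [apply: allmapsP | apply/decPE].
  rewrite Hg // /T0 -pullback_comp; split; first by case.
  by move=> H; split => //; exact: emb_comp Hf (aut_emb Ag).
exists K'; split => //.
exists (fun As => Kstar Ks (induced M (A m)) As /\ Ep d l p As).
split; first by move=> As [].
move=> f.
case: (exh_seq HA (imgs [:: f])) => n Hn.
have Hfn : forall x, f x \in A n.
  by move=> x; apply: Hn; apply: in_flatten_maps; left.
split.
  move=> Sf; have Hf := HS f Sf; split => //; split.
    split; first exact: (pullback_Ks Hexc HX' (proj1 Hf)).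
    exact: exp_pullback HX'.1 Hf.
  by rewrite -(HQ n f Hf Hfn).
by case=> Hf [_ HE]; rewrite (HQ n f Hf Hfn).
Qed.
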